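(* Let $R:\mathcal X\times\mathcal X\to\mathcal X\times\mathcal X$ be a pentagon map. Then for every $n>1$, $i,l\in\{1,\dots,n\}$ and $k\in\{1,\dots,n-l+1\}$, the map ${}^{(n)}T^{i,k,l}:\mathcal X^n\times\mathcal X^n\to\mathcal X^n\times\mathcal X^n$ is a pentagon map, i.e. $$T_{23}\circ T_{12}=T_{12}\circ T_{13}\circ T_{23}$$ as maps on $\mathcal X^{3n}$.
   Context: Pentagon map: for a set $Y$ and $S:Y\times Y\to Y\times Y$, with $S_{12}=S\times\mathrm{id}_Y$, $S_{23}=\mathrm{id}_Y\times S$, $S_{13}(y_1,y_2,y_3)=(p,y_2,q)$ where $(p,q)=S(y_1,y_3)$, one requires $S_{12}\circ S_{13}\circ S_{23}=S_{23}\circ S_{12}$ (rightmost applied first). For an integer $m$ and $b\in\{1,2,3\}$ let $[m]_b$ be the unique element of $\{(b-1)n+1,\dots,bn\}$ congruent to $m$ mod $n$. For positions $p\neq q$ of $\mathcal X^N$, $R_{p,q}$ acts as $R$ on components $(p,q)$ and identically elsewhere; $\circ_{j=1}^k f^j:=f^1\circ\cdots\circ f^k$. On $\mathcal X^{2n}$: ${}^{(n)}t^{i,k,m}=\circ_{j=1}^{k}R_{[i+k+m-1]_1,[i+n+j-1]_2}$ and ${}^{(n)}T^{i,k,l}={}^{(n)}t^{i,k,0}\circ\cdots\circ{}^{(n)}t^{i,k,l-1}$. On $\mathcal X^{3n}$: $t^{m}_{12}=\circ_{j=1}^{k}R_{[i+k+m-1]_1,[i+n+j-1]_2}$, $t^{m}_{13}=\circ_{j=1}^{k}R_{[i+k+m-1]_1,[i+2n+j-1]_3}$,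 $t^{m}_{23}=\circ_{j=1}^{k}R_{[i+n+k+m-1]_2,[i+2n+j-1]_3}$, and $T_{st}=t^{0}_{st}\circ\cdots\circ t^{l-1}_{st}$; these coincide with $({}^{(n)}T^{i,k,l})_{12},({}^{(n)}T^{i,k,l})_{13},({}^{(n)}T^{i,k,l})_{23}$ in the sense of the pentagon-map definition with $Y=\mathcal X^n$. *)

(* Defs.v *)
From mathcomp Require Import all_boot.
Set Implicit Arguments. Unset Strict Implicit. Unset Printing Implicit Defensive.

Section Pentagon.
Variable Y : Type.
Variable S : Y * Y -> Y * Y.

Definition S12 (y : Y * Y * Y) : Y * Y * Y :=
  let: (y1, y2, y3) := y in let: (a, b) := S (y1, y2) in (a, b, y3).
Definition S23 (y : Y * Y * Y) : Y * Y * Y :=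
  let: (y1, y2, y3) := y in let: (a, b) := S (y2, y3) in (y1, a, b).
Definition S13 (y : Y * Y * Y) : Y * Y * Y :=
  let: (y1, y2, y3) := y in let: (p, q) := S (y1, y3) in (p, y2, q).

Definition pentagon_map : Prop :=
  forall y : Y * Y * Y, S12 (S13 (S23 y)) = S23 (S12 y).
End Pentagon.

(* X^N is represented by {ffun 'I_N -> X}; position p in {1,...,N}
   (1-based, as in the paper) is the ordinal p.-1. *)
Section Positions.
Variable X : Type.
Variable R : X * X -> X * X.

(* R_{p,q}: acts as R on components (p,q), identically elsewhere.
   (If p or q is out of range it is the identity; this never occurs below.) *)
Definition Rpq (N p q : nat) (x : {ffun 'I_N -> X}) : {ffun 'I_N -> X} :=
  match (insub p.-1 : option 'I_N), (insub q.-1 : option 'I_N) with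
  | Some op, Some oq =>
      let r := R (x op, x oq) in
      [ffun j => if j == op then r.1 else if j == oq then r.2 else x j]
  | _, _ => x
  end.
End Positions.

(* [m]_b : the unique element of {(b-1)n+1, ..., bn} congruent to m mod n *)
Definition brk (n m b : nat) : nat := (b - 1) * n + ((m - 1) %% n) + 1.

Definition circ_from {A : Type} (s : seq nat) (f : nat -> A -> A) : A -> A :=
  foldr (fun j g => f j \o g) id s.

Section Tmaps.
Variable X : Type.
Variable R : X * X -> X * X.
Variables n i k l : nat.

Definition t12 (m : nat) : {ffun 'I_(3 * n) -> X} -> {ffun 'I_(3 * n) -> X} :=
  circ_from (iota 1 k) (fun j =>
    Rpq R (brk n (i + k + m - 1) 1) (brk n (i + n + j - 1) 2)).
Definition t13 (m : nat) : {ffun 'I_(3 * n) -> X} -> {ffun 'I_(3 * n) -> X} :=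
  circ_from (iota 1 k) (fun j =>
    Rpq R (brk n (i + k + m - 1) 1) (brk n (i + 2 * n + j - 1) 3)).
Definition t23 (m : nat) : {ffun 'I_(3 * n) -> X} -> {ffun 'I_(3 * n) -> X} :=
  circ_from (iota 1 k) (fun j =>
    Rpq R (brk n (i + n + k + m - 1) 2) (brk n (i + 2 * n + j - 1) 3)).

Definition T12 := circ_from (iota 0 l) (fun m => t12 m).
Definition T13 := circ_from (iota 0 l) (fun m => t13 m).
Definition T23 := circ_from (iota 0 l) (fun m => t23 m).
End Tmaps.
Arguments t12 [X] R n i k m _.
Arguments t13 [X] R n i k m _.
Arguments t23 [X] R n i k m _.
Arguments T12 [X] R n i k l _.
Arguments T13 [X] R n i k l _.
Arguments T23 [X] R n i k l _.

(* Main.v *)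
Require Import Defs.
From mathcomp Require Import all_boot zify.
Set Implicit Arguments. Unset Strict Implicit. Unset Printing Implicit Defensive.

Section RpqFacts.
Variables (X : Type) (R : X * X -> X * X) (N : nat).
Local Notation G := (@Rpq X R N).

Lemma G_comm p q r s x : 0 < p -> 0 < q -> 0 < r -> 0 < s ->
  p != r -> p != s -> q != r -> q != s ->
  G p q (G r s x) = G r s (G p q x).
Proof.
move=> p0 q0 r0 s0 pr ps qr qs; rewrite /Rpq.
case: insubP => [op _ Hop|_] //; case: insubP => [oq _ Hoq|_] //;
case: insubP => [or _ Hor|_] //; case: insubP => [os _ Hos|_] //.
have ne : forall (a b : 'I_N) u v, 0 < u -> 0 < v -> u != v -> val a = u.-1 -> val b = v.-1 -> (a == b) = false.
  move=> a b u v u0 v0 /eqP uv Ha Hb; apply/eqP => E; apply: uv; rewrite E in Ha; lia.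
have e1 := ne _ _ _ _ p0 r0 pr Hop Hor; have e2 := ne _ _ _ _ p0 s0 ps Hop Hos.
have e3 := ne _ _ _ _ q0 r0 qr Hoq Hor; have e4 := ne _ _ _ _ q0 s0 qs Hoq Hos.
have f1 : (or == op) = false by rewrite eq_sym.
have f2 : (os == op) = false by rewrite eq_sym.
have f3 : (or == oq) = false by rewrite eq_sym.
have f4 : (os == oq) = false by rewrite eq_sym.
apply/ffunP => j; rewrite !ffunE e1 e2 e3 e4 f1 f2 f3 f4.
case: (eqVneq j op) => [->|/negbTE jp]; rewrite ?eqxx ?e1 ?e2 ?jp //.
case: (eqVneq j oq) => [->|/negbTE jq]; rewrite ?eqxx ?e3 ?e4 ?jq //.
Qed.

Lemma G_pent p q r x : 0 < p <= N -> 0 < q <= N -> 0 < r <= N ->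
  p != q -> p != r -> q != r -> pentagon_map R ->
  G p q (G p r (G q r x)) = G q r (G p q x).
Proof.
move=> /andP[p0 pN] /andP[q0 qN] /andP[r0 rN] pq pr qr HP; rewrite /Rpq.
case: insubP => [op _ Hop|]; last by rewrite ltnNge; lia.
case: insubP => [oq _ Hoq|]; last by rewrite ltnNge; lia.
case: insubP => [or _ Hor|]; last by rewrite ltnNge; lia.
have ne : forall (a b : 'I_N) u v, 0 < u -> 0 < v -> u != v -> val a = u.-1 -> val b = v.-1 -> (a == b) = false.
  move=> a b u v u0 v0 /eqP uv Ha Hb; apply/eqP => E; apply: uv; rewrite E in Ha; lia.
have e1 := ne _ _ _ _ p0 q0 pq Hop Hoq; have e2 := ne _ _ _ _ p0 r0 pr Hop Hor.
have e3 := ne _ _ _ _ q0 r0 qr Hoq Hor.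
have := HP (x op, x oq, x or).
rewrite /S12 /S13 /S23.
case E1: (R (x oq, x or)) => [a1 b1].
case E2: (R (x op, b1)) => [a2 b2].
case E3: (R (a2, a1)) => [a3 b3].
case E4: (R (x op, x oq)) => [c1 d1].
case E5: (R (d1, x or)) => [c2 d2].
move=> [H1 H2 H3].
have f1 : (oq == op) = false by rewrite eq_sym.
have f2 : (or == op) = false by rewrite eq_sym.
have f3 : (or == oq) = false by rewrite eq_sym.
apply/ffunP => j; rewrite !ffunE !eqxx e1 e2 e3 f1 f2 f3 /=.
rewrite E2 /= E3 /= E5 /= H1 H2 H3.
case: (eqVneq j op) => [->|/negbTE jp]; rewrite ?eqxx ?e1 ?e2 ?f1 ?f2 ?jp //.
by case: (j == oq); case: (j == or).
Qed.
End RpqFacts.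
Section Words.
Variables (F : Type) (G : nat -> nat -> F -> F) (ok : pred nat).
Hypothesis Hc : forall p q r s x, ok p -> ok q -> ok r -> ok s ->
  p != r -> p != s -> q != r -> q != s -> G p q (G r s x) = G r s (G p q x).
Hypothesis Hp : forall p q r x, ok p -> ok q -> ok r ->
  p != q -> p != r -> q != r -> G p q (G p r (G q r x)) = G q r (G p q x).

Fixpoint row (p : nat) (zs : seq nat) (x : F) : F :=
  if zs is z :: zs' then G p z (row p zs' x) else x.
Fixpoint big (ps zs : seq nat) (x : F) : F :=
  if ps is p :: ps' then row p zs (big ps' zs x) else x.

Definition comm (f g : F -> F) := forall x, f (g x) = g (f x).

Lemma comm_row h p zs : (forall z, z \in zs -> comm h (G p z)) -> comm h (row p zs).
Proof.
elim: zs => [|z zs IH] H x //=.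
rewrite H ?mem_head // IH // => w wz; apply: H; by rewrite in_cons wz orbT.
Qed.

Lemma comm_big h ps zs : (forall p, p \in ps -> comm h (row p zs)) -> comm h (big ps zs).
Proof.
elim: ps => [|p ps IH] H x //=.
rewrite H ?mem_head // IH // => w wz; apply: H; by rewrite in_cons wz orbT.
Qed.

Lemma comm_sym f g : comm f g -> comm g f. Proof. by move=> H x; rewrite H. Qed.

Lemma row_rcons p ys q x : row p (rcons ys q) x = row p ys (G p q x).
Proof. by elim: ys => //= y ys ->. Qed.

Lemma sweep p q zs : ok p -> ok q -> all ok zs -> p != q -> p \notin zs -> q \notin zs ->
  uniq zs -> forall x, row q zs (G p q x) = G p q (row p zs (row q zs x)).
Proof.
move=> op oq; elim: zs => [|z zs IH] //= /andP[oz ozs] pq.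
rewrite !in_cons !negb_or => /andP[pz pzs] /andP[qz qzs] /andP[zzs uzs] x.
rewrite IH // -[in LHS]Hp //.
congr (G p q (G p z _)).
apply: (comm_row (h := G q z)) => w wzs y.
have ow : ok w by move/allP: ozs; apply.
apply: Hc => //; first by rewrite eq_sym.
- by apply: contraNneq qzs => ->.
- by rewrite eq_sym.
- by apply: contraNneq zzs => ->.
Qed.

Definition D (s t : seq nat) := forall a b, a \in s -> b \in t -> a != b.

Lemma D_sym s t : D s t -> D t s.
Proof. by move=> H a b ha hb; rewrite eq_sym; apply: H. Qed.
Lemma D_consl a s t : D (a :: s) t -> D s t.
Proof. by move=> H u v hu hv; apply: H; rewrite ?in_cons ?hu ?orbT. Qed.
Lemma D_head a s t b : D (a :: s) t -> b \in t -> a != b.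
Proof. by move=> H hb; apply: H; rewrite ?mem_head. Qed.
Lemma D_rcons s t q : D s (rcons t q) -> D s t.
Proof. by move=> H u v hu hv; apply: H; rewrite ?mem_rcons ?in_cons ?hv ?orbT. Qed.

Lemma rowstep p q ys zs : ok p -> ok q -> all ok ys -> all ok zs -> p != q ->
  D ys [:: q] -> D [:: p] zs -> D [:: q] zs -> uniq zs -> D ys zs ->
  forall x, row q zs (row p (rcons ys q) x) = row p (rcons ys q) (row p zs (row q zs x)).
Proof.
move=> op oq oys ozs pq Dyq Dpz Dqz uzs Dyz x.
rewrite !row_rcons.
have -> : row q zs (row p ys (G p q x)) = row p ys (row q zs (G p q x)).
  apply: comm_row => y hy w; apply: comm_sym; apply: comm_row => z hz v.
  have oy : ok y by move/allP: oys; apply.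
  have oz : ok z by move/allP: ozs; apply.
  apply: Hc => //.
  - by apply: Dpz; rewrite ?mem_head.
  - by apply: Dyq; rewrite ?mem_head.
  - by apply: Dyz.
rewrite sweep //.
- by apply/negP => hp; move: (Dpz p p); rewrite mem_head eqxx => /(_ isT hp).
- by apply/negP => hp; move: (Dqz q q); rewrite mem_head eqxx => /(_ isT hp).
Qed.

Lemma bigstep q xs ys zs : ok q -> all ok xs -> all ok ys -> all ok zs ->
  uniq xs -> uniq zs -> D xs [:: q] -> D ys [:: q] -> D [:: q] zs ->
  D xs ys -> D xs zs -> D ys zs ->
  forall x, row q zs (big xs (rcons ys q) x) = big xs (rcons ys q) (big xs zs (row q zs x)).
Proof.
move=> oq; elim: xs => [|a xs IH] //= /andP[oa oxs] oys ozs /andP[axs uxs] uzs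
  Dxq Dyq Dqz Dxy Dxz Dyz x.
rewrite rowstep //; first last.
- by move=> u v; rewrite inE => /eqP ->; apply: (D_head Dxz).
- by apply: (D_head Dxq); rewrite mem_head.
rewrite IH //; try by apply: D_consl; eassumption.
congr (row a (rcons ys q) _).
apply: comm_big => b hb w; apply: comm_row => y hy v.
apply: comm_sym; apply: comm_row => z hz u.
have ob : ok b by move/allP: oxs; apply.
have oy : ok y.
  move: hy; rewrite mem_rcons inE => /orP[/eqP -> //|hy]; by move/allP: oys; apply.
have oz : ok z by move/allP: ozs; apply.
apply: Hc => //.
- by apply: contraNneq axs => <-.
- by apply: (D_consl Dxz).
- move: hy; rewrite mem_rcons inE => /orP[/eqP ->|hy].
    by rewrite eq_sym; apply: (D_head Dxq); rewrite mem_head.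
  by rewrite eq_sym; apply: (D_head Dxy).
- move: hy; rewrite mem_rcons inE => /orP[/eqP ->|hy].
    by apply: Dqz; rewrite ?mem_head.
  by apply: Dyz.
Qed.

Lemma wordthm q qs xs ys zs : ok q -> all ok qs -> all ok xs -> all ok ys -> all ok zs ->
  uniq xs -> uniq zs -> D xs [:: q] -> D ys [:: q] -> D [:: q] zs ->
  D xs ys -> D xs zs -> D ys zs -> D qs (rcons ys q) -> D qs xs -> D qs zs ->
  forall x, big (q :: qs) zs (big xs (rcons ys q) x) =
            big xs (rcons ys q) (big xs zs (big (q :: qs) zs x)).
Proof.
move=> oq oqs oxs oys ozs uxs uzs Dxq Dyq Dqz Dxy Dxz Dyz Dqy Dqx Dqzz x /=.
have -> : big qs zs (big xs (rcons ys q) x) = big xs (rcons ys q) (big qs zs x).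
  apply: comm_big => b hb w; apply: comm_row => y hy v.
  apply: comm_sym; apply: comm_big => c hc u; apply: comm_row => z hz t.
  have ob : ok b by move/allP: oxs; apply.
  have oc : ok c by move/allP: oqs; apply.
  have oy : ok y.
    move: hy; rewrite mem_rcons inE => /orP[/eqP -> //|hy]; by move/allP: oys; apply.
  have oz : ok z by move/allP: ozs; apply.
  apply: Hc => //.
  - by rewrite eq_sym; apply: Dqx.
  - by apply: Dxz.
  - by rewrite eq_sym; apply: Dqy.
  - move: hy; rewrite mem_rcons inE => /orP[/eqP ->|hy].
      by apply: Dqz; rewrite ?mem_head.
    by apply: Dyz.
by rewrite bigstep.
Qed.
End Words.
Lemma brk_pos n m b : 0 < n -> (b - 1) * n < brk n m b <= (b - 1) * n + n.
Proof. move=> n0; rewrite /brk; have := ltn_pmod (m - 1) n0; lia. Qed.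

Lemma brk_inj n m1 m2 b : 0 < n -> 0 < m1 -> m1 < m2 -> m2 - m1 < n ->
  brk n m1 b != brk n m2 b.
Proof.
move=> n0 m10 m12 dn; rewrite /brk; apply/eqP => E.
have E2 : (m1 - 1) %% n = (m1 - 1 + (m2 - m1)) %% n.
  have -> : m1 - 1 + (m2 - m1) = m2 - 1 by lia.
  lia.
move: E2; rewrite -[X in X %% n = _]addn0 => /eqP; rewrite eqn_modDl mod0n modn_small //.
lia.
Qed.

Lemma circ_big X (R : X * X -> X * X) N (f g : nat -> nat) s s' (x : {ffun 'I_N -> X}) :
  circ_from s (fun m => circ_from s' (fun j => Rpq R (f m) (g j))) x =
  big (@Rpq X R N) (map f s) (map g s') x.
Proof.
have Hr : forall p y, circ_from s' (fun j => Rpq R p (g j)) y = row (@Rpq X R N) p (map g s') y.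
  by move=> p y; elim: s' y => //= j s' IH y; rewrite IH.
by elim: s x => //= m s IH y; rewrite Hr IH.
Qed.
Lemma brk_eq n m1 m2 b : 0 < n -> 0 < m1 -> 0 < m2 ->
  (m1 < m2 -> m2 - m1 < n) -> (m2 < m1 -> m1 - m2 < n) -> brk n m1 b = brk n m2 b -> m1 = m2.
Proof.
move=> n0 p1 p2 h1 h2 E; case: (ltngtP m1 m2) => // H.
- by move: (brk_inj b n0 p1 H (h1 H)); rewrite E eqxx.
- by move: (brk_inj b n0 p2 H (h2 H)); rewrite E eqxx.
Qed.

Lemma iota_rc m n : iota m n.+1 = rcons (iota m n) (m + n).
Proof. by rewrite -addn1 iotaD -cats1. Qed.

Lemma Dmap (f g : nat -> nat) s t :
  (forall u v, u \in s -> v \in t -> f u != g v) -> D (map f s) (map g t).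
Proof. by move=> H a b /mapP[u hu ->] /mapP[v hv ->]; apply: H. Qed.

Lemma allmap (P : pred nat) (f : nat -> nat) s : (forall u, P (f u)) -> all P (map f s).
Proof. by move=> H; apply/allP => a /mapP[u _ ->]. Qed.

Theorem mainTheorem11 (X : Type) (R : X * X -> X * X) (n i k l : nat) :
  pentagon_map R ->
  1 < n ->
  1 <= i <= n ->
  1 <= l <= n ->
  1 <= k <= n - l + 1 ->
  forall x : {ffun 'I_(3 * n) -> X},
    T23 R n i k l (T12 R n i k l x) = T12 R n i k l (T13 R n i k l (T23 R n i k l x)).
Proof.
move=> HP n1 /andP[i1 iN] /andP[l1 lN] /andP[k1 kN] x.
have n0 : 0 < n by lia.
have [k' Ek] : exists k', k = k'.+1 by exists k.-1; lia.
have [l' El] : exists l', l = l'.+1 by exists l.-1; lia.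
subst k l.
pose ok := fun p => 0 < p <= 3 * n.
pose G := @Rpq X R (3 * n).
have Hc : forall p q r s y, ok p -> ok q -> ok r -> ok s ->
  p != r -> p != s -> q != r -> q != s -> G p q (G r s y) = G r s (G p q y).
  move=> p q r s y /andP[? _] /andP[? _] /andP[? _] /andP[? _]; exact: G_comm.
have Hp : forall p q r y, ok p -> ok q -> ok r ->
  p != q -> p != r -> q != r -> G p q (G p r (G q r y)) = G q r (G p q y).
  move=> p q r y ? ? ? ? ? ?; exact: G_pent.
pose xp := fun m => brk n (i + k'.+1 + m - 1) 1.
pose yB := fun j => brk n (i + n + j - 1) 2.
pose yA := fun m => brk n (i + n + k'.+1 + m - 1) 2.
pose zB := fun j => brk n (i + 2 * n + j - 1) 3.
have E12 : forall y, T12 R n i k'.+1 l'.+1 y =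
    big G (map xp (iota 0 l'.+1)) (map yB (iota 1 k'.+1)) y.
  by move=> y; exact: (circ_big R xp yB).
have E13 : forall y, T13 R n i k'.+1 l'.+1 y =
    big G (map xp (iota 0 l'.+1)) (map zB (iota 1 k'.+1)) y.
  by move=> y; exact: (circ_big R xp zB).
have E23 : forall y, T23 R n i k'.+1 l'.+1 y =
    big G (map yA (iota 0 l'.+1)) (map zB (iota 1 k'.+1)) y.
  by move=> y; exact: (circ_big R yA zB).
rewrite !E12 E13 !E23.
have EY : map yB (iota 1 k'.+1) = rcons (map yB (iota 1 k')) (yA 0).
  rewrite iota_rc map_rcons; congr rcons; rewrite /yA /yB; congr brk; lia.
have EQ : map yA (iota 0 l'.+1) = yA 0 :: map yA (iota 1 l') by [].
rewrite EY EQ.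
have bp := brk_pos.
apply: (wordthm Hc Hp).
- by rewrite /ok /xp /yA /yB /zB; move: (bp n (i + n + k'.+1 + 0 - 1) 2 n0); lia.
- by apply: allmap => u; rewrite /ok /xp /yA /yB /zB; move: (bp n (i + n + k'.+1 + u - 1) 2 n0); lia.
- by apply: allmap => u; rewrite /ok /xp /yA /yB /zB; move: (bp n (i + k'.+1 + u - 1) 1 n0); lia.
- by apply: allmap => u; rewrite /ok /xp /yA /yB /zB; move: (bp n (i + n + u - 1) 2 n0); lia.
- by apply: allmap => u; rewrite /ok /xp /yA /yB /zB; move: (bp n (i + 2 * n + u - 1) 3 n0); lia.
- rewrite map_inj_in_uniq ?iota_uniq // => u v; rewrite !mem_iota => hu hv E.
  have := brk_eq n0 _ _ _ _ E; lia.
- rewrite map_inj_in_uniq ?iota_uniq // => u v; rewrite !mem_iota => hu hv E.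
  have := brk_eq n0 _ _ _ _ E; lia.
- change [:: yA 0] with (map yA [:: 0]); apply: Dmap => u v hu hv.
  move: (bp n (i + k'.+1 + u - 1) 1 n0) (bp n (i + n + k'.+1 + v - 1) 2 n0); rewrite /xp /yA; lia.
- change [:: yA 0] with (map yA [:: 0]); apply: Dmap => u v; rewrite mem_iota inE => hu /eqP ->.
  rewrite /yB /yA; apply: brk_inj; lia.
- change [:: yA 0] with (map yA [:: 0]); apply: Dmap => u v _ hv.
  move: (bp n (i + n + k'.+1 + u - 1) 2 n0) (bp n (i + 2 * n + v - 1) 3 n0); rewrite /zB /yA; lia.
- apply: Dmap => u v hu hv.
  move: (bp n (i + k'.+1 + u - 1) 1 n0) (bp n (i + n + v - 1) 2 n0); rewrite /xp /yB; lia.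
- apply: Dmap => u v hu hv.
  move: (bp n (i + k'.+1 + u - 1) 1 n0) (bp n (i + 2 * n + v - 1) 3 n0); rewrite /xp /zB; lia.
- apply: Dmap => u v hu hv.
  move: (bp n (i + n + u - 1) 2 n0) (bp n (i + 2 * n + v - 1) 3 n0); rewrite /yB /zB; lia.
- rewrite -EY; apply: Dmap => u v; rewrite !mem_iota => hu hv.
  rewrite /yB /yA eq_sym; apply: brk_inj; lia.
- apply: Dmap => u v hu hv.
  move: (bp n (i + n + k'.+1 + u - 1) 2 n0) (bp n (i + k'.+1 + v - 1) 1 n0); rewrite /xp /yA; lia.
- apply: Dmap => u v hu hv.
  move: (bp n (i + n + k'.+1 + u - 1) 2 n0) (bp n (i + 2 * n + v - 1) 3 n0); rewrite /zB /yA; lia.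
Qed.
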